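(* Let $n=2e$ be even and consider a collection of disjoint decorated circularly ordered subsets of $\mathbb{Z}_n$ covering $\mathbb{Z}_n$ (each element of $\mathbb{Z}_n$ occurring in exactly one subset, with a decoration $+$ or $-$). This collection is a vertex set (i.e., it is the set of vertices induced by a signed planar diagram of the $n$-gon all of whose vertices have degree at least $3$) if and only if the following conditions hold: (1) each subset has at least three corners; (2) for no $i\in\mathbb{Z}_n$ is $i_+(i+1)_+\cdots$ a subset; (3) if $i_+j_+\cdots$ is a subset then $(j-1)_+(i+1)_+\cdots$ is a subset, and if $i_+j_-\cdots$ is a subset then $(i+1)_-(j+1)_+\cdots$ is a subset.
   Context: The corners of an $n$-gon are labelled by $i\in\mathbb{Z}_n$ in circular order, and $\bar i$ denotes the edge from corner $i$ to corner $i+1$. A (signed) planar diagram is a partition of the $n$ edges into $n/2$ unordered pairs, each pair carrying a sign: $\{\bar i,\bar j\}_+$ (opposing pair, glued orientation-compatibly) or $\{\bar i,\bar j\}_-$ (twisted pair); glueing gives a single-tile tiling of a closed surface. A decorated corner is a symbol $i_\pm$ with $i\in\mathbb{Z}_n$. A decorated circularly ordered subset is a cyclic sequence of decorated corners with distinct underlying corners, considered up to rotation (keeping decorations) and up to reversing the cyclic order while simultaneously changing every decoration $\pm$ to $\mp$. We say ''$a_\alpha b_\beta\cdots$ is a subset'' if some subset has a representative in which $a_\alpha$ is immediately followed (cyclically) by $b_\beta$. A planar diagram $D$ induces vertices by the successor rules: $i_+$ is followed by $(j+1)_+$ if $\{\bar i,\bar j\}_+\in D$, and by $j_-$ if $\{\bar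 i,\bar j\}_-\in D$; $i_-$ is followed by $(j+1)_+$ if $\{\overline{i-1},\bar j\}_-\in D$, and by $j_-$ if $\{\overline{i-1},\bar j\}_+\in D$. Starting from any decorated corner and following these rules until returning yields a vertex (a decorated circularly ordered subset); the degree of a vertex is its number of corners. A vertex set is the collection of vertices induced in this way by a planar diagram all of whose vertices have degree at least $3$. *)

(* Defs.v *)
From mathcomp Require Import all_boot.
Set Implicit Arguments. Unset Strict Implicit. Unset Printing Implicit Defensive.

(* Corners of the n-gon: 'I_n (= Z_n), with cyclic successor ordS / predecessor
   ord_pred.  Edge \bar i (from corner i to i+1) is also indexed by i : 'I_n.
   Decorated corner i_+ is (i, true), i_- is (i, false). *)
Definition dcorner (n : nat) := ('I_n * bool)%type.

Definition dflip n (x : dcorner n) : dcorner n := (x.1, ~~ x.2).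

(* A signed planar diagram: pr i is the edge paired with edge i (a fixed-point
   free involution, so the pairs partition the n edges), sg i is the sign of
   the pair containing i (true = +, opposing; false = -, twisted). *)
Definition diagram n (pr : 'I_n -> 'I_n) (sg : 'I_n -> bool) : Prop :=
  forall i, [/\ pr (pr i) = i, pr i != i & sg (pr i) = sg i].

Definition vnext n (pr : 'I_n -> 'I_n) (sg : 'I_n -> bool) (x : dcorner n)
  : dcorner n :=
  let: (i, d) := x in
  if d then (if sg i then (ordS (pr i), true) else (pr i, false))
  else let k := ord_pred i in
       if sg k then (pr k, false) else (ordS (pr k), true).

Definition vertex_of n pr sg (x : dcorner n) : seq (dcorner n) :=
  orbit (@vnext n pr sg) x.

Definition dcs_equiv n (s t : seq (dcorner n)) : Prop :=
  exists k, t = rot k s \/ t = rot k (rev (map (@dflip n) s)).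

Definition dcs_cover n (C : seq (seq (dcorner n))) : Prop :=
  uniq (map fst (flatten C)) /\ forall i : 'I_n, i \in map fst (flatten C).

Definition is_vertex_set n (C : seq (seq (dcorner n))) : Prop :=
  exists pr sg, [/\ diagram pr sg,
    (forall x, 3 <= size (@vertex_of n pr sg x)),
    (forall s, s \in C -> exists x, dcs_equiv s (@vertex_of n pr sg x)) &
    (forall x, exists2 s, s \in C & dcs_equiv s (@vertex_of n pr sg x))].

(* "a b ... is a subset": some subset has a representative in which a is
   immediately (cyclically) followed by b *)
Definition followed n (C : seq (seq (dcorner n))) (a b : dcorner n) : Prop :=
  exists2 s, s \in C &
    ((a \in s) && (next s a == b)) ||
    ((dflip b \in s) && (next s (dflip b) == dflip a)).

(* Main.v *)
Require Import Defs.
From mathcomp Require Import all_boot.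
Set Implicit Arguments. Unset Strict Implicit. Unset Printing Implicit Defensive.

Lemma pair_inj (A B : Type) (a c : A) (b d : B) : (a, b) = (c, d) -> a = c /\ b = d.
Proof. by case=> -> ->. Qed.

Section Aux.
Variable n : nat.
Local Notation T := (dcorner n).
Lemma ordSI (i j : 'I_n) : ordS i = ordS j -> i = j.
Proof. exact: (@ordS_inj n i j). Qed.

Lemma dflipK : involutive (@dflip n).
Proof. by case=> i b; rewrite /dflip /= negbK. Qed.
Lemma dflip_inj : injective (@dflip n). Proof. exact: inv_inj dflipK. Qed.
Lemma dflip_neq (x : T) : dflip x != x.
Proof. by case: x => i b; rewrite /dflip /= xpair_eqE eqxx /=; case: b. Qed.
Lemma dflip_eq (x y : T) : (dflip x == y) = (x == dflip y).
Proof. by rewrite -{1}(dflipK y) (inj_eq dflip_inj). Qed.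

Definition Rb (s : seq T) (a b : T) : bool :=
  ((a \in s) && (next s a == b)) || ((dflip b \in s) && (next s (dflip b) == dflip a)).

Lemma Rb_flip s a b : Rb s a b = Rb s (dflip b) (dflip a).
Proof. by rewrite /Rb !dflipK orbC. Qed.

Lemma Rb_rot s k a b : uniq s -> Rb (rot k s) a b = Rb s a b.
Proof. by move=> u; rewrite /Rb !mem_rot !next_rot. Qed.

Lemma andb_prev (s : seq T) x y : uniq s ->
  (x \in s) && (prev s x == y) = (y \in s) && (next s y == x).
Proof.
move=> u; case xs: (x \in s) => /=.
  apply/eqP/andP => [<-|[ys /eqP <-]]; first by rewrite mem_prev next_prev.
  by rewrite prev_next.
by apply/esym/negbTE; apply/andP => -[ys /eqP e]; rewrite -e mem_next ys in xs.
Qed.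

Lemma mem_rev_flip (s : seq T) x : (x \in rev (map (@dflip n) s)) = (dflip x \in s).
Proof. by rewrite mem_rev -{1}(dflipK x) (mem_map dflip_inj). Qed.

Lemma next_rev_flip (s : seq T) x : uniq s ->
  next (rev (map (@dflip n) s)) x = dflip (prev s (dflip x)).
Proof.
move=> u; rewrite next_rev ?(map_inj_uniq dflip_inj) //.
by rewrite -{1}(dflipK x) (prev_map dflip_inj).
Qed.

Lemma Rb_rev s a b : uniq s -> Rb (rev (map (@dflip n) s)) a b = Rb s a b.
Proof.
move=> u; rewrite /Rb !mem_rev_flip !next_rev_flip // !dflipK !dflip_eq.
by rewrite !andb_prev // !dflipK orbC.
Qed.

Lemma Rb_equiv s t a b : uniq s -> dcs_equiv s t -> Rb s a b = Rb t a b.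
Proof.
move=> u [k [->|->]]; first by rewrite Rb_rot.
by rewrite Rb_rot ?Rb_rev // rev_uniq (map_inj_uniq dflip_inj).
Qed.

Lemma fst_inj_in (s : seq T) x y : uniq (map fst s) -> x \in s -> y \in s -> x.1 = y.1 -> x = y.
Proof.
elim: s => //= z s IH /andP[zs us]; rewrite !inE => /orP[/eqP->|xs] /orP[/eqP->|ys] e //.
- by rewrite e (map_f fst ys) in zs.
- by rewrite -e (map_f fst xs) in zs.
- exact: IH.
Qed.

Lemma cover_eq (C : seq (seq T)) s s' x y : uniq (map fst (flatten C)) ->
  s \in C -> s' \in C -> x \in s -> y \in s' -> x.1 = y.1 -> s = s' /\ x = y.
Proof.
elim: C => //= s0 C IH; rewrite map_cat cat_uniq => /and3P[u0 hn u].
rewrite !inE => /orP[/eqP->|sC] /orP[/eqP->|s'C] xs ys e.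
- by split=> //; exact: fst_inj_in u0 xs ys e.
- case/negP: hn; apply/hasP; exists y.1; first by apply: map_f; apply/flattenP; exists s'.
  by rewrite /= -e map_f.
- case/negP: hn; apply/hasP; exists x.1; first by apply: map_f; apply/flattenP; exists s.
  by rewrite /= e map_f.
- exact: IH.
Qed.

Lemma cover_uniq_s (C : seq (seq T)) s : uniq (map fst (flatten C)) -> s \in C -> uniq s.
Proof.
elim: C => //= s0 C IH; rewrite map_cat cat_uniq => /and3P[u0 _ u].
by rewrite inE => /orP[/eqP->|/(IH u)//]; exact: map_uniq u0.
Qed.


Section Fwd.
Variables (pr : 'I_n -> 'I_n) (sg : 'I_n -> bool).
Hypothesis hd : diagram pr sg.
Local Notation f := (@vnext n pr sg).

Lemma vpT i : sg i -> f (i, true) = (ordS (pr i), true).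
Proof. by rewrite /vnext => ->. Qed.
Lemma vpF i : sg i = false -> f (i, true) = (pr i, false).
Proof. by rewrite /vnext => ->. Qed.
Lemma vmT i : sg (ord_pred i) -> f (i, false) = (pr (ord_pred i), false).
Proof. by rewrite /vnext => ->. Qed.
Lemma vmF i : sg (ord_pred i) = false -> f (i, false) = (ordS (pr (ord_pred i)), true).
Proof. by rewrite /vnext => ->. Qed.
Lemma dflipE (i : 'I_n) b : dflip (i, b) = (i, ~~ b). Proof. by []. Qed.

Lemma vnext_flip x : f (dflip (f x)) = dflip x.
Proof.
case: x => i [].
- case: (hd i) => pp _ ss; case si: (sg i).
  + rewrite vpT // dflipE vmT; first by rewrite ordSK pp.
    by rewrite ordSK ss.
  + rewrite vpF // dflipE vpF; first by rewrite pp.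
    by rewrite ss.
- case: (hd (ord_pred i)) => pp _ ss; case si: (sg (ord_pred i)).
  + rewrite vmT // dflipE vpT; first by rewrite pp ord_predK.
    by rewrite ss.
  + rewrite vmF // dflipE vmF; first by rewrite ordSK pp ord_predK.
    by rewrite ordSK ss.
Qed.

Lemma vnext_inj : injective f.
Proof. by move=> x y e; apply: dflip_inj; rewrite -(vnext_flip x) -(vnext_flip y) e. Qed.

Lemma Rb_orbit x a b : Rb (orbit f x) a b -> f a = b.
Proof.
have cyc := cycle_orbit vnext_inj x.
case/orP => /andP[ax /eqP e0]; first by apply/eqP; rewrite -e0; exact: next_cycle cyc ax.
have /eqP e := next_cycle cyc ax; rewrite e0 in e.
by rewrite -(dflipK a) -e vnext_flip dflipK.
Qed.

Lemma Rb_orbit_self a : Rb (orbit f a) a (f a).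
Proof.
apply/orP; left; rewrite in_orbit; apply/eqP/esym/eqP.
exact: next_cycle (cycle_orbit vnext_inj a) (in_orbit _ _).
Qed.

End Fwd.

Lemma fwd (C : seq (seq T)) : dcs_cover C -> is_vertex_set C ->
  exists pr sg, [/\ diagram pr sg, (forall s, s \in C -> 3 <= size s) &
    (forall a b, followed C a b <-> vnext pr sg a = b)].
Proof.
case=> hu _ [pr [sg [hd h3 hC hV]]]; exists pr, sg; split=> //.
- move=> s sC; have [x [k [e|e]]] := hC s sC; have := h3 x; rewrite e size_rot //.
  by rewrite size_rev size_map.
- move=> a b; split.
  + case=> s sC r; have [x ex] := hC s sC.
    have r' : Rb s a b by [].
    rewrite (@Rb_equiv s _ a b (cover_uniq_s hu sC) ex) in r'.
    exact: (Rb_orbit hd r').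
  + move=> <-; have [s sC ex] := hV a; exists s => //.
    have : Rb s a (vnext pr sg a); last by [].
    rewrite (@Rb_equiv s _ a _ (cover_uniq_s hu sC) ex).
    exact: Rb_orbit_self.
Qed.

Section Back.
Variable C : seq (seq T).
Hypothesis hu : uniq (map fst (flatten C)).
Hypothesis hcov : forall i : 'I_n, i \in map fst (flatten C).

Definition fb a b := has (fun s => Rb s a b) C.
Lemma fbP a b : reflect (followed C a b) (fb a b).
Proof. by apply: (iffP hasP) => -[s sC r]; exists s. Qed.

Definition g (s : seq T) (a : T) : T := if a \in s then next s a else dflip (prev s (dflip a)).

Lemma no_both s x : s \in C -> x \in s -> dflip x \in s -> False.
Proof.
move=> sC xs fxs; have [_ e] := cover_eq hu sC sC xs fxs (erefl _).
by move: (dflip_neq x); rewrite -e eqxx.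
Qed.

Lemma exists_s a : exists2 s, s \in C & (a \in s) || (dflip a \in s).
Proof.
have /mapP[y /flattenP[s sC ys] e] := hcov a.1.
exists s => //; case: a e => i b /= e; case: y ys e => j c ys /= e; subst j.
by case: b; case: c ys => ys; rewrite ?ys ?orbT.
Qed.

Lemma Rb_mem s a b : Rb s a b -> (a \in s) || (dflip a \in s).
Proof.
case/orP => /andP[xs /eqP e]; first by rewrite xs.
by rewrite -e mem_next xs orbT.
Qed.

Lemma Rb_fun s a b : s \in C -> Rb s a b -> b = g s a.
Proof.
move=> sC; rewrite /g; case/orP => /andP[xs /eqP e]; first by rewrite xs e.
have fas : dflip a \in s by rewrite -e mem_next.
case: ifP => [as_|_]; first by case: (no_both sC as_ fas).
by rewrite -e prev_next ?dflipK // (cover_uniq_s hu sC).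
Qed.

Lemma Rb_g s a : s \in C -> (a \in s) || (dflip a \in s) -> Rb s a (g s a).
Proof.
move=> sC; rewrite /g /Rb; case: ifP => [as_ _|_ /= fas]; first by rewrite ?as_ eqxx.
by rewrite dflipK mem_prev fas next_prev ?eqxx ?orbT // (cover_uniq_s hu sC).
Qed.

Lemma same_s s s' a : s \in C -> s' \in C -> (a \in s) || (dflip a \in s) ->
  (a \in s') || (dflip a \in s') -> s = s'.
Proof.
move=> sC s'C h h'.
have [z zs ez] : exists2 z, z \in s & z.1 = a.1.
  by case/orP: h => h; [exists a | exists (dflip a)].
have [z' zs' ez'] : exists2 z, z \in s' & z.1 = a.1.
  by case/orP: h' => h2; [exists a | exists (dflip a)].
by case: (cover_eq hu sC s'C zs zs' (etrans ez (esym ez'))).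
Qed.

Lemma fb_unique a b b' : fb a b -> fb a b' -> b = b'.
Proof.
case/hasP => s sC r; case/hasP => s' s'C r'.
have e := same_s sC s'C (Rb_mem r) (Rb_mem r'); subst s'.
by rewrite (Rb_fun sC r) (Rb_fun sC r').
Qed.

Definition F a := odflt a [pick b | fb a b].

Lemma fbF a : fb a (F a).
Proof.
rewrite /F; case: pickP => [b //|/= h].
have [s sC m] := exists_s a.
by move: (h (g s a)); rewrite /fb; move/negbT/hasPn => /(_ s sC); rewrite Rb_g.
Qed.

Lemma F_spec a b : followed C a b <-> F a = b.
Proof.
split => [/fbP h|<-]; first exact: fb_unique (fbF a) h.
exact/fbP/fbF.
Qed.

Lemma F_g s y : s \in C -> (y \in s) || (dflip y \in s) -> F y = g s y.
Proof. by move=> sC m; apply/F_spec; exists s => //; exact: Rb_g. Qed.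

Lemma F_flip a : F (dflip (F a)) = dflip a.
Proof.
apply/F_spec; have [s sC r] := (proj2 (F_spec a (F a)) (erefl _)).
by exists s => //; rewrite -[_ && _ || _]/(Rb s _ _) -Rb_flip.
Qed.

Lemma F_inj : injective F.
Proof. by move=> x y e; apply: dflip_inj; rewrite -(F_flip x) -(F_flip y) e. Qed.

Lemma F_nflip a : F a != dflip a.
Proof.
apply/eqP => /F_spec [s sC]; rewrite dflipK => /orP[] /andP[m /eqP e].
  by apply: (no_both sC m); rewrite -e mem_next.
by apply: (no_both sC m); rewrite -e mem_next.
Qed.

Lemma dflipT (i : 'I_n) : dflip (i, true) = (i, false). Proof. by []. Qed.
Lemma dflipF (i : 'I_n) : dflip (i, false) = (i, true). Proof. by []. Qed.

Lemma F_flip' a b : F a = b -> F (dflip b) = dflip a.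
Proof. by move=> <-; exact: F_flip. Qed.

Hypothesis hs : forall s, s \in C -> 3 <= size s.
Hypothesis h2 : forall i : 'I_n, ~ followed C (i, true) (ordS i, true).
Hypothesis h3 : forall i j : 'I_n,
         (followed C (i, true) (j, true) ->
            followed C (ord_pred j, true) (ordS i, true)) /\
         (followed C (i, true) (j, false) ->
            followed C (ordS i, false) (ordS j, true)).

Lemma F4 i : F (i,true) != (ordS i, true).
Proof. by apply/eqP => /F_spec /h2. Qed.
Lemma F5 i j : F (i,true) = (j,true) -> F (ord_pred j, true) = (ordS i, true).
Proof. by move=> /F_spec /(proj1 (h3 i j)) /F_spec. Qed.
Lemma F6 i j : F (i,true) = (j,false) -> F (ordS i, false) = (ordS j, true).
Proof. by move=> /F_spec /(proj2 (h3 i j)) /F_spec. Qed.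

Definition sgF (i : 'I_n) := (F (i,true)).2.
Definition prF (i : 'I_n) := if sgF i then ord_pred (F (i,true)).1 else (F (i,true)).1.

Lemma Fp i : F (i,true) = if sgF i then (ordS (prF i), true) else (prF i, false).
Proof. by rewrite /prF /sgF; case: (F (i,true)) => j [] /=; rewrite ?ord_predK. Qed.

Lemma FpT i : sgF i -> F (i,true) = (ordS (prF i), true).
Proof. by move=> h; rewrite Fp h. Qed.
Lemma FpF i : sgF i = false -> F (i,true) = (prF i, false).
Proof. by move=> h; rewrite Fp h. Qed.

Lemma diagF : diagram prF sgF.
Proof.
move=> i; case si: (sgF i); [have e := FpT si | have e := FpF si].
- have e5 := F5 e; rewrite ordSK in e5.
  case sj: (sgF (prF i)); [move: (FpT sj) | move: (FpF sj)]; rewrite e5 => /(@pair_inj _ _ _ _ _ _) [] //.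
  move=> /ordSI pp _.
  split => //; apply/eqP => pe; move: (F4 i); by rewrite e pe eqxx.
- set j := prF i in e *.
  have e6 := F6 e; have ef := F_flip' e6; rewrite dflipT dflipF in ef.
  case sj: (sgF j); [have ej := FpT sj | have ej := FpF sj].
  + have e5 := F5 ej; rewrite ordSK in e5.
    by have /(@pair_inj _ _ _ _ _ _) [] := F_inj (etrans e5 (esym e6)).
  + have e6' := F6 ej; have /(@pair_inj _ _ _ _ _ _) [/ordSI pj _] := etrans (esym e6') ef.
    split => //; apply/eqP => ji; move: (F_nflip (i, true)); by rewrite e ji eqxx.
Qed.

Lemma vnextF x : vnext prF sgF x = F x.
Proof.
case: x => i [].
- case si: (sgF i); [by rewrite vpT // FpT | by rewrite vpF // FpF].
- case sk: (sgF (ord_pred i)); [have e := FpT sk | have e := FpF sk].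
  + rewrite vmT //; have e5 := F5 e; rewrite ordSK ord_predK in e5.
    by have := F_flip' e5; rewrite dflipT => ->.
  + rewrite vmF //; have := F6 e; by rewrite ord_predK => ->.
Qed.

Lemma cyc_s s : s \in C -> fcycle (vnext prF sgF) s.
Proof.
move=> sC; apply: cycle_from_next => [|y ys]; first exact: cover_uniq_s hu sC.
by apply/eqP; rewrite vnextF (F_g sC) ?ys // /g ys.
Qed.

Lemma cyc_t s : s \in C -> fcycle (vnext prF sgF) (rev (map (@dflip n) s)).
Proof.
move=> sC; have us := cover_uniq_s hu sC.
apply: cycle_from_next => [|y]; first by rewrite rev_uniq (map_inj_uniq dflip_inj).
rewrite mem_rev_flip => fys; apply/eqP.
rewrite vnextF (F_g sC) ?fys ?orbT // /g next_rev_flip //.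
by case: ifP => // ys; case: (no_both sC ys fys).
Qed.

Lemma vertexF x : exists2 s, s \in C & dcs_equiv s (vertex_of prF sgF x).
Proof.
have [s sC /orP[xs|fxs]] := exists_s x; exists s => //.
- have := orbitE (cyc_s sC) (cover_uniq_s hu sC) xs; move=> h; exists (index x s); left; exact: h.
- have U : uniq (rev (map (@dflip n) s)).
    by rewrite rev_uniq (map_inj_uniq dflip_inj) (cover_uniq_s hu sC).
  have M : x \in rev (map (@dflip n) s) by rewrite mem_rev_flip.
  exists (index x (rev (map (@dflip n) s))); right; exact: (orbitE (cyc_t sC) U M).
Qed.

Lemma equiv_size (s t : seq T) : dcs_equiv s t -> size t = size s.
Proof. by case=> k [->|->]; rewrite size_rot // size_rev size_map. Qed.

Lemma back : is_vertex_set C.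
Proof.
exists prF, sgF; split.
- exact: diagF.
- by move=> x; have [s sC /equiv_size ->] := vertexF x; exact: hs.
- move=> s sC; have := hs sC; case: s sC => // x s sC _; exists x.
  have := orbitE (cyc_s sC) (cover_uniq_s hu sC) (mem_head x s); move=> h.
  exists (index x (x :: s)); left; exact: h.
- exact: vertexF.
Qed.

End Back.
End Aux.

Theorem proposition3p1 (n : nat) (hn0 : 0 < n) (hev : ~~ odd n)
  (C : seq (seq (dcorner n))) (hC : dcs_cover C) :
  is_vertex_set C <->
  [/\ (forall s, s \in C -> 3 <= size s),
      (forall i : 'I_n, ~ followed C (i, true) (ordS i, true)) &
      (forall i j : 'I_n,
         (followed C (i, true) (j, true) ->
            followed C (ord_pred j, true) (ordS i, true)) /\
         (followed C (i, true) (j, false) ->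
            followed C (ordS i, false) (ordS j, true)))].
Proof.
split.
- move=> hv; have [pr [sg [hd hs hf]]] := fwd hC hv; split => //.
  + move=> i /hf; case: (hd i) => _ pi _; case si: (sg i).
    * by rewrite vpT // => /(@pair_inj _ _ _ _ _ _) [/ordSI pe _]; rewrite pe eqxx in pi.
    * by rewrite vpF // => /(@pair_inj _ _ _ _ _ _) [].
  + move=> i j; split => /hf e; apply/hf.
    * case: (hd i) => pp _ ss; move: e; case si: (sg i).
      - rewrite vpT // => /(@pair_inj _ _ _ _ _ _) [<- _].
        by rewrite ordSK vpT ?pp // ss.
      - by rewrite vpF // => /(@pair_inj _ _ _ _ _ _) [].
    * case: (hd i) => pp _ ss; move: e; case si: (sg i).
      - by rewrite vpT // => /(@pair_inj _ _ _ _ _ _) [].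
      - rewrite vpF // => /(@pair_inj _ _ _ _ _ _) [<- _].
        by rewrite vmF ordSK // ordSK.
- case=> hs h2 h3; case: hC => hu hcov; exact: back.
Qed.
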